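(* Assume the standing conventions of the context. (i) If $m'=m+1$, $Z'$ is regular and $D_Z=\{Z'\}$, then $Z$ is regular. (ii) If $m'=m$, $Z$ is regular and $D_{Z'}=\{Z\}$, then $Z'$ is regular.
   Context: A symbol is an array $\Lambda=\binom{a'_1,\ldots,a'_{m_1}}{b'_1,\ldots,b'_{m_2}}$ of two strictly decreasing finite sequences of nonnegative integers (top row, bottom row); its defect is $\mathrm{def}(\Lambda)=m_1-m_2$. Standing assumptions: $Z=\binom{a_1,\ldots,a_{m+1}}{b_1,\ldots,b_m}$ is a special symbol of defect $1$, i.e. $a_1\ge b_1\ge a_2\ge b_2\ge\cdots\ge b_m\ge a_{m+1}$; $Z'=\binom{c_1,\ldots,c_{m'}}{d_1,\ldots,d_{m'}}$ is a special symbol of defect $0$, i.e. $c_1\ge d_1\ge c_2\ge d_2\ge\cdots\ge c_{m'}\ge d_{m'}$; and $m'\in\{m,m+1\}$. For a symbol $Y$, $Y_{\mathrm I}$ is the set of entries of $Y$ occurring in exactly one row; $Y$ is regular if no entry occurs in both rows. For $M\subset Z_{\mathrm I}$, $\Lambda_M$ is the symbol obtained from $Z$ by moving every entry of $M$ to the other row (rows re-sorted decreasingly); for $N\subset Z'_{\mathrm I}$, $\Lambda_N$ is obtained from $Z'$ in the same way. $\overline{\mathcal S}_Z=\{\Lambda_M: M\subset Z_{\mathrm I}\}$, $\overline{\mathcal S}_{Z'}=\{\Lambda_N:N\subset Z'_{\mathrm I}\}$; $\mathcal S_{Z,1}$ (resp. $\mathcal S_{Z',0}$) is the set of elements of $\overline{\mathcal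 S}_Z$ of defect $1$ (resp. of $\overline{\mathcal S}_{Z'}$ of defect $0$). Relation $\overline{\mathcal B}^+_{Z,Z'}\subset\overline{\mathcal S}_Z\times\overline{\mathcal S}_{Z'}$: for $\Lambda=\binom{a'_1,\ldots,a'_{m_1}}{b'_1,\ldots,b'_{m_2}}\in\overline{\mathcal S}_Z$ and $\Lambda'=\binom{c'_1,\ldots,c'_{m'_1}}{d'_1,\ldots,d'_{m'_2}}\in\overline{\mathcal S}_{Z'}$, $(\Lambda,\Lambda')\in\overline{\mathcal B}^+_{Z,Z'}$ iff $\mathrm{def}(\Lambda')=1-\mathrm{def}(\Lambda)$ and: if $m'=m$, $a'_i>d'_i\ge a'_{i+1}$ for $1\le i\le m'_2$ and $b'_{i-1}>c'_i\ge b'_i$ for $1\le i\le m'_1$; if $m'=m+1$, $a'_i\ge d'_i>a'_{i+1}$ for $1\le i\le m'_2$ and $b'_{i-1}\ge c'_i>b'_i$ for $1\le i\le m'_1$; here $b'_0=+\infty$ and nonexistent entries $a'_j,b'_j$ beyond the row lengths are $-\infty$. Then $\mathcal D_{Z,Z'}=\overline{\mathcal B}^+_{Z,Z'}\cap(\mathcal S_{Z,1}\times\mathcal S_{Z',0})$, $D_Z=\{\Lambda'\mid (Z,\Lambda')\in\mathcal D_{Z,Z'}\}$ and $D_{Z'}=\{\Lambda\mid(\Lambda,Z')\in\mathcal D_{Z,Z'}\}$. *)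

(* Defs.v *)
From mathcomp Require Import all_boot all_order all_algebra.
Set Implicit Arguments. Unset Strict Implicit. Unset Printing Implicit Defensive.
Import GRing.Theory Num.Theory.

(* A symbol: (top row, bottom row), rows listed in decreasing order. *)
Definition symbol := (seq nat * seq nat)%type.

Definition strdec (s : seq nat) : bool := sorted (fun x y => y < x)%N s.
Definition is_symbol (L : symbol) : bool := strdec L.1 && strdec L.2.

Definition defect (L : symbol) : int := (size L.1)%:Z - (size L.2)%:Z.

(* special symbol of defect 1: a_1 >= b_1 >= a_2 >= ... >= b_m >= a_{m+1} *)
Definition special1 (m : nat) (Z : symbol) : Prop :=
  [/\ is_symbol Z, size Z.1 = m.+1, size Z.2 = m &
      forall i, (i < m)%N ->
        (nth 0 Z.2 i <= nth 0 Z.1 i)%N /\ (nth 0 Z.1 i.+1 <= nth 0 Z.2 i)%N].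

(* special symbol of defect 0: c_1 >= d_1 >= c_2 >= ... >= c_m' >= d_m' *)
Definition special0 (m' : nat) (Z : symbol) : Prop :=
  [/\ is_symbol Z, size Z.1 = m', size Z.2 = m' &
      (forall i, (i < m')%N -> (nth 0 Z.2 i <= nth 0 Z.1 i)%N) /\
      (forall i, (i.+1 < m')%N -> (nth 0 Z.1 i.+1 <= nth 0 Z.2 i)%N)].

Definition inI (L : symbol) (x : nat) : bool := (x \in L.1) != (x \in L.2).

Definition regular (L : symbol) : Prop := forall x, ~ (x \in L.1 /\ x \in L.2).

Definition move (L : symbol) (M : seq nat) : symbol :=
  (sort (fun x y => y <= x)%N
     ([seq x <- L.1 | x \notin M] ++ [seq x <- L.2 | x \in M]),
   sort (fun x y => y <= x)%N
     ([seq x <- L.2 | x \notin M] ++ [seq x <- L.1 | x \in M])).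

Definition in_Sbar (L Lam : symbol) : Prop :=
  exists M : seq nat, (forall x, x \in M -> inI L x) /\ Lam = move L M.

Definition S1 (Z Lam : symbol) : Prop := in_Sbar Z Lam /\ defect Lam = 1%R.
Definition S0 (Z' Lam : symbol) : Prop := in_Sbar Z' Lam /\ defect Lam = 0%R.

(* extended naturals, for the conventions b'_0 = +oo, missing entries = -oo *)
Inductive xnat := NInf | Fin of nat | PInf.

Definition xle (x y : xnat) : bool :=
  match x, y with
  | NInf, _ => true
  | _, PInf => true
  | Fin a, Fin b => (a <= b)%N
  | _, _ => false
  end.
Definition xlt (x y : xnat) : bool := ~~ xle y x.

(* 1-indexed entry of a row; nonexistent entries are -oo *)
Definition ent (s : seq nat) (i : nat) : xnat :=
  if (0 < i <= size s)%N then Fin (nth 0 s i.-1) else NInf.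
(* same, with the 0-th entry being +oo (used for b'_0) *)
Definition entb (s : seq nat) (i : nat) : xnat :=
  if i == 0%N then PInf else ent s i.

(* the relation \bar B^+_{Z,Z'}; eqm = (m' == m) *)
Definition Bplus (eqm : bool) (L L' : symbol) : Prop :=
  (defect L' = 1 - defect L)%R /\
  if eqm then
    (forall i, (1 <= i <= size L'.2)%N ->
       xlt (ent L'.2 i) (ent L.1 i) && xle (ent L.1 i.+1) (ent L'.2 i)) /\
    (forall i, (1 <= i <= size L'.1)%N ->
       xlt (ent L'.1 i) (entb L.2 i.-1) && xle (ent L.2 i) (ent L'.1 i))
  else
    (forall i, (1 <= i <= size L'.2)%N ->
       xle (ent L'.2 i) (ent L.1 i) && xlt (ent L.1 i.+1) (ent L'.2 i)) /\
    (forall i, (1 <= i <= size L'.1)%N ->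
       xle (ent L'.1 i) (entb L.2 i.-1) && xlt (ent L.2 i) (ent L'.1 i)).

Definition Drel (m m' : nat) (Z Z' L L' : symbol) : Prop :=
  [/\ S1 Z L, S0 Z' L' & Bplus (m' == m) L L'].

Definition D_Z (m m' : nat) (Z Z' L' : symbol) : Prop := Drel m m' Z Z' Z L'.
Definition D_Z' (m m' : nat) (Z Z' L : symbol) : Prop := Drel m m' Z Z' L Z'.

(* Main.v *)
Require Import Defs.
From mathcomp Require Import all_boot all_order all_algebra.
From mathcomp Require Import zify.
Set Implicit Arguments. Unset Strict Implicit. Unset Printing Implicit Defensive.

Lemma xle_refl x : xle x x. Proof. by case: x => //= n. Qed.
Lemma xle_trans x y z : xle x y -> xle y z -> xle x z.
Proof. case: x; case: y; case: z => //= a b c; exact: leq_trans. Qed.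
Lemma xle_total x y : xle x y || xle y x.
Proof. case: x; case: y => //= a b; exact: leq_total. Qed.
Lemma xltW x y : xlt x y -> xle x y.
Proof. rewrite /xlt => H; by case/orP: (xle_total x y) => // H'; rewrite H' in H. Qed.
Lemma xlt_le_trans x y z : xlt x y -> xle y z -> xlt x z.
Proof. rewrite /xlt => H1 H2; apply/negP => H3; move/negP: H1; apply; exact: xle_trans H2 H3. Qed.
Lemma xle_lt_trans x y z : xle x y -> xlt y z -> xlt x z.
Proof. rewrite /xlt => H1 H2; apply/negP => H3; move/negP: H2; apply; exact: xle_trans H3 H1. Qed.
Lemma xlt_trans x y z : xlt x y -> xlt y z -> xlt x z.
Proof. move=> H1 H2; exact: xlt_le_trans H1 (xltW H2). Qed.
Lemma xlt_irr x : xlt x x = false.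
Proof. by rewrite /xlt xle_refl. Qed.
Lemma xlt_neq x y : xlt x y -> x <> y.
Proof. by move=> H E; rewrite E xlt_irr in H. Qed.

Definition zx (Y : symbol) (k : nat) : xnat :=
  if odd k then ent Y.2 (k./2).+1 else ent Y.1 (k./2).+1.
Definition zp (z : nat -> xnat) (k : nat) : xnat :=
  if k is k'.+1 then z k' else PInf.

Lemma zx_even Y i : zx Y (i + i) = ent Y.1 i.+1.
Proof. by rewrite /zx addnn odd_double doubleK. Qed.
Lemma zx_odd Y i : zx Y (i + i).+1 = ent Y.2 i.+1.
Proof. by rewrite /zx addnn /= odd_double /= uphalf_double. Qed.

Lemma ent_in s i : i < size s -> ent s i.+1 = Fin (nth 0 s i).
Proof. by rewrite /ent /= => ->. Qed.
Lemma ent_out s i : size s <= i -> ent s i.+1 = NInf.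
Proof. by rewrite /ent /= ltnNge => ->. Qed.

Lemma evod k : exists i, k = i + i \/ k = (i + i).+1.
Proof.
elim: k => [|k [i [->|->]]]; first by exists 0; left.
- by exists i; right.
- by exists i.+1; left; rewrite addSn addnS.
Qed.

Definition Low (z w : nat -> xnat) N := forall k, k < N -> xlt (z k.+1) (w k).
Definition Up (z w : nat -> xnat) N := forall k, k < N -> xle (w k) (zp z k).

Lemma disc (s : nat -> bool) a b : a <= b -> s a -> ~~ s b ->
  exists p, [/\ a <= p, p < b, s p & ~~ s p.+1].
Proof.
move=> ab; elim: b ab => [|b IH] ab sa sb.
  by move: ab; rewrite leqn0 => /eqP E; rewrite E (negbTE sb) in sa.
case: (ltngtP a b.+1) ab => // [ab' | E] _; last by rewrite E (negbTE sb) in sa.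
case sb': (s b).
- by exists b; split => //; lia.
- have [p [? ? ? ?]] := IH ab' sa (negbT sb'). exists p; split => //; lia.
Qed.

Definition sw (w : nat -> xnat) p q :=
  if q == p then w p.+1 else if q == p.+1 then w p else w q.

Lemma key z w N j :
  Low z w N -> Up z w N -> (forall k, k.+1 < N -> xlt (w k.+1) (w k)) ->
  z N.-1 = NInf -> j.+1 < N.-1 -> z j = z j.+1 ->
  exists p, [/\ p.+1 < N, xle (w p) (z p), xlt (z p.+1) (w p.+1),
     Low z (sw w p) N & Up z (sw w p) N].
Proof.
move=> HL HU HD HN hj ej.
have s1 : xle (w j.+1) (z j.+1) by rewrite -ej; apply: (HU j.+1); lia.
have s2 : ~~ xle (w N.-1) (z N.-1).
  rewrite HN; have := HL N.-1; rewrite (_ : N.-1.+1 = N); last by lia.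
  by case: (w N.-1) => //; move=> H; have := H ltac:(lia).
have [p [h1 h2 h3 h4]] := disc (s := fun q => xle (w q) (z q)) (ltnW hj) s1 s2.
have hp : p.+1 < N by lia.
exists p; split => //.
- move=> k hk; rewrite /sw; case: eqP => [->|_] //.
  case: eqP => [->|_]; last exact: HL.
  apply: xlt_trans (HL p.+1 hp) (HD p hp).
- move=> k hk; rewrite /sw; case: eqP => [->|_].
    apply: xltW; apply: xlt_le_trans (HD p hp) (HU p _); lia.
  case: eqP => [->|_] //; exact: HU.
Qed.

Lemma LowUp_row z w N : Low z w N -> Up z w N ->
  forall q, q.+2 < N -> xlt (w q.+2) (w q).
Proof.
move=> HL HU q hq; apply: xle_lt_trans (HU q.+2 hq) (HL q _); lia.
Qed.

Lemma dec_chain (w : nat -> xnat) N : (forall k, k.+1 < N -> xlt (w k.+1) (w k)) ->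
  forall i j, i < j -> j < N -> xlt (w j) (w i).
Proof.
move=> HD i j ij; elim: j ij => // j IH; rewrite ltnS leq_eqVlt => /orP [/eqP <-|ij] jN.
  exact: HD.
apply: xlt_trans (HD j jN) (IH ij _); lia.
Qed.

Definition condF (L L' : symbol) :=
    (forall i, (1 <= i <= size L'.2)%N ->
       xle (ent L'.2 i) (ent L.1 i) && xlt (ent L.1 i.+1) (ent L'.2 i)) /\
    (forall i, (1 <= i <= size L'.1)%N ->
       xle (ent L'.1 i) (entb L.2 i.-1) && xlt (ent L.2 i) (ent L'.1 i)).
Definition condT (L L' : symbol) :=
    (forall i, (1 <= i <= size L'.2)%N ->
       xlt (ent L'.2 i) (ent L.1 i) && xle (ent L.1 i.+1) (ent L'.2 i)) /\
    (forall i, (1 <= i <= size L'.1)%N ->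
       xlt (ent L'.1 i) (entb L.2 i.-1) && xle (ent L.2 i) (ent L'.1 i)).

Lemma dbl2 i : (i + i).+2 = i.+1 + i.+1. Proof. lia. Qed.

Lemma transF L L' s : size L'.1 = s -> size L'.2 = s ->
  condF L L' <-> Low (zx L) (zx L') (s + s) /\ Up (zx L) (zx L') (s + s).
Proof.
move=> h1 h2; split.
- move=> [A B]; split => k; have [i [->|->]] := evod k => hk.
  + rewrite zx_odd zx_even; have /andP[_ ->] //:= B i.+1 ltac:(lia).
  + rewrite dbl2 zx_even zx_odd; have /andP[_ ->] //:= A i.+1 ltac:(lia).
  + rewrite zx_even; case: i hk => [|i] hk /=; first by case: (ent _ _).
    rewrite -addSnnS zx_odd; by have /andP[-> _] := B i.+2 ltac:(lia).
  + rewrite /= zx_odd zx_even; have /andP[-> _] //:= A i.+1 ltac:(lia).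
- move=> [HL HU]; split => -[|i] hi //.
  + have := HU (i + i).+1 ltac:(lia); have := HL (i + i).+1 ltac:(lia).
    by rewrite /= dbl2 !zx_odd !zx_even => -> ->.
  + have := HU (i + i) ltac:(lia); have := HL (i + i) ltac:(lia).
    rewrite zx_odd zx_even => -> /=; case: i {hi} => [|i].
      by case: (ent _ _).
    by rewrite -dbl2 /= zx_odd andbT.
Qed.

Lemma transT L L' n : size L.1 = n.+1 -> size L.2 = n ->
  size L'.1 = n -> size L'.2 = n ->
  condT L L' <-> Low (zx L') (zx L) (n.+1 + n) /\ Up (zx L') (zx L) (n.+1 + n).
Proof.
move=> h1 h2 h3 h4; split.
- move=> [A B]; split => k; have [i [->|->]] := evod k => hk.
  + rewrite zx_odd zx_even; case: (ltnP i n) => hin.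
      have /andP[-> _] //:= A i.+1 ltac:(lia).
    rewrite ent_out ?h4 // ent_in ?h1 //; lia.
  + rewrite dbl2 zx_even zx_odd; case: (ltnP i.+1 n) => hin.
      by have /andP[-> _] := B i.+2 ltac:(lia).
    by rewrite ent_out ?h3 // ent_in ?h2 //; lia.
  + rewrite zx_even; case: i hk => [|i] hk /=; first by case: (ent _ _).
    rewrite -addSnnS zx_odd; have /andP[_ ->] //:= A i.+1 ltac:(lia).
  + rewrite /= zx_odd zx_even; have /andP[_ ->] //:= B i.+1 ltac:(lia).
- move=> [HL HU]; split => -[|i] hi //.
  + have := HU (i + i).+2 ltac:(lia); have := HL (i + i) ltac:(lia).
    by rewrite /= dbl2 !zx_odd !zx_even => -> ->.
  + have := HU (i + i).+1 ltac:(lia).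
    rewrite /= zx_odd zx_even => -> ; rewrite andbT.
    case: i hi => [|i] hi /=.
      rewrite ent_in //; lia.
    have := HL (i + i).+1 ltac:(lia).
    by rewrite dbl2 zx_even zx_odd.
Qed.

Definition shape (Y : symbol) := size Y.2 <= size Y.1 <= (size Y.2).+1.
Definition sp (Y : symbol) :=
  (forall i, i < size Y.2 -> nth 0 Y.2 i <= nth 0 Y.1 i) /\
  (forall i, i.+1 < size Y.1 -> nth 0 Y.1 i.+1 <= nth 0 Y.2 i).

Lemma mem_nth0 (s : seq nat) i : i < size s -> nth 0 s i \in s.
Proof. exact: mem_nth. Qed.

Lemma odd_ii i : odd (i + i) = false. Proof. by rewrite addnn odd_double. Qed.

Lemma zx_fin Y k : shape Y -> k < size Y.1 + size Y.2 ->
  exists x, zx Y k = Fin x /\ (if odd k then x \in Y.2 else x \in Y.1).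
Proof.
rewrite /shape => /andP[hs1 hs2]; have [i [->|->]] := evod k => hk.
- exists (nth 0 Y.1 i); rewrite zx_even odd_ii /= ent_in ?mem_nth0 //; lia.
- exists (nth 0 Y.2 i); rewrite zx_odd /= odd_ii ent_in ?mem_nth0 //; lia.
Qed.

Lemma zx_out Y k : shape Y -> size Y.1 + size Y.2 <= k -> zx Y k = NInf.
Proof.
rewrite /shape => /andP[hs1 hs2]; have [i [->|->]] := evod k => hk.
- rewrite zx_even ent_out //; lia.
- rewrite zx_odd ent_out //; lia.
Qed.

Lemma xltF a b : xlt (Fin a) (Fin b) = (a < b).
Proof. by rewrite /xlt /= ltnNge. Qed.

Lemma zx_strict Y : shape Y -> sp Y -> regular Y ->
  forall k, k.+1 < size Y.1 + size Y.2 -> xlt (zx Y k.+1) (zx Y k).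
Proof.
rewrite /shape => /andP[hs1 hs2] [s1 s2] reg k; have [i [->|->]] := evod k => hk.
- rewrite zx_odd zx_even !ent_in ?xltF; try lia.
  rewrite ltn_neqAle s1 ?andbT; last lia.
  apply/eqP => E; apply: (reg (nth 0 Y.2 i)); split; last (apply: mem_nth0; lia).
  rewrite E; apply: mem_nth0; lia.
- rewrite dbl2 zx_odd zx_even !ent_in ?xltF; try lia.
  rewrite ltn_neqAle s2 ?andbT; last lia.
  apply/eqP => E; apply: (reg (nth 0 Y.2 i)); split; last (apply: mem_nth0; lia).
  rewrite -E; apply: mem_nth0; lia.
Qed.

Lemma nth_lt (s : seq nat) i j : strdec s -> i < j -> j < size s -> nth 0 s j < nth 0 s i.
Proof.
move=> hs ij js.
have := sorted_ltn_nth (leT := fun x y => y < x) _ 0 hs.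
move=> /(_ _) H; apply: (H _ i j) => //; rewrite ?inE; try lia.
by move=> a b c h1 h2; apply: ltn_trans h2 h1.
Qed.

Lemma nonreg_adj Y x : is_symbol Y -> shape Y -> sp Y -> x \in Y.1 -> x \in Y.2 ->
  exists j, j.+1 < size Y.1 + size Y.2 /\ zx Y j = zx Y j.+1.
Proof.
rewrite /shape => /andP[d1 d2] hs [s1 s2] x1 x2.
set i := index x Y.1; set j := index x Y.2.
have hi : i < size Y.1 by rewrite index_mem.
have hj : j < size Y.2 by rewrite index_mem.
have ei : nth 0 Y.1 i = x by rewrite nth_index.
have ej : nth 0 Y.2 j = x by rewrite nth_index.
case: (ltngtP i j) => ij.
- have := nth_lt d2 ij hj; have := s1 i ltac:(lia); rewrite ei ej; lia.
- case: (ltngtP i j.+1) => ij'; first lia.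
  + have := nth_lt d1 ij' hi; have := s2 j ltac:(lia); rewrite ei ej; lia.
  + exists (j + j).+1; split; first lia.
    by rewrite dbl2 zx_even zx_odd !ent_in // -ij' ?ei ?ej //; lia.
- exists (i + i); split; first lia.
  have hj' : i < size Y.2 by rewrite ij.
  by rewrite zx_even zx_odd (ent_in hi) (ent_in hj') ei ij ej.
Qed.

Lemma zx_sym L : shape L -> (forall q, q.+2 < size L.1 + size L.2 -> xlt (zx L q.+2) (zx L q)) ->
  is_symbol L.
Proof.
rewrite /shape => /andP[hs1 hs2] H; apply/andP; split; apply/(sortedP 0) => i hi.
- have := H (i + i) ltac:(lia); rewrite dbl2 !zx_even !ent_in ?xltF //; lia.
- have := H (i + i).+1 ltac:(lia); rewrite (_ : (i+i).+3 = (i.+1 + i.+1).+1); last lia; rewrite !zx_odd !ent_in ?xltF //; lia.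
Qed.

Definition sg (u v : nat) x := if x == u then v else if x == v then u else x.
Lemma sgK u v : involutive (sg u v).
Proof.
move=> x; rewrite /sg; case: (eqVneq x u) => [->|xu]; rewrite ?eqxx.
  by case: (eqVneq v u) => [->|vu] //; rewrite eqxx.
case: (eqVneq x v) => [->|xv]; rewrite ?eqxx //.
by rewrite (negbTE xu) (negbTE xv).
Qed.
Lemma sgC u v x : u != v -> sg u v x = sg v u x.
Proof.
move=> uv; rewrite /sg; case: (eqVneq x u) => [->|xu]; rewrite ?eqxx.
  by rewrite (negbTE uv).
by case: (eqVneq x v).
Qed.

Lemma gtrans : transitive (fun x y : nat => y < x).
Proof. by move=> a b c h1 h2; apply: ltn_trans h2 h1. Qed.

Lemma strdec_uniq s : strdec s -> uniq s.
Proof. apply: sorted_uniq; [exact: gtrans | by move=> x; rewrite /= ltnn]. Qed.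

Lemma sort_geq (s t : seq nat) : uniq s -> strdec t -> s =i t ->
  sort (fun x y => y <= x) s = t.
Proof.
move=> us dt st.
have tot : total (fun x y : nat => y <= x) by move=> a b; exact: leq_total.
have tr : transitive (fun x y : nat => y <= x) by move=> a b c h1 h2; exact: leq_trans h2 h1.
have an : antisymmetric (fun x y : nat => y <= x).
  by move=> a b /andP[h1 h2]; apply/eqP; rewrite eqn_leq h1 h2.
rewrite (perm_sortP tot tr an s t _); last exact: uniq_perm (strdec_uniq dt) st.
apply: sorted_sort => //; apply: sub_sorted dt => a b; exact: ltnW.
Qed.

Lemma move_nil Y : is_symbol Y -> move Y [::] = Y.
Proof.
case: Y => s t /andP[ds dt]; rewrite /move /=.
have f1 : forall r : seq nat, [seq x <- r | x \notin [::]] = r.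
  by elim=> //= x r ->.
have f2 : forall r : seq nat, [seq x <- r | x \in [::]] = [::].
  by elim.
have tr : transitive (fun x y : nat => y <= x) by move=> a b c h1 h2; exact: leq_trans h2 h1.
have sub : subrel (fun x y : nat => y < x) (fun x y : nat => y <= x) by move=> a b; exact: ltnW.
rewrite !f1 !f2 !cats0 !sorted_sort //; [exact: (sub_sorted sub dt) | exact: (sub_sorted sub ds)].
Qed.

Lemma move_swap Y u v : is_symbol Y -> regular Y -> u \in Y.1 -> v \in Y.2 ->
  is_symbol (map (sg u v) Y.1, map (sg u v) Y.2) ->
  move Y [:: u; v] = (map (sg u v) Y.1, map (sg u v) Y.2).
Proof.
case: Y => s t /andP[ds dt] reg u1 v2 /andP[d1 d2] /=.
simpl in *.
have u2 : u \notin t by apply/negP => h; apply: (reg u).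
have v1 : v \notin s by apply/negP => h; apply: (reg v).
have us := strdec_uniq ds; have ut := strdec_uniq dt.
have inj := can_inj (sgK u v).
have memsg r x : (x \in map (sg u v) r) = (sg u v x \in r).
  by rewrite -{1}(sgK u v x) (mem_map inj).
rewrite /move /=; congr pair.
- apply: (sort_geq _ d1).
    rewrite cat_uniq !filter_uniq //= andbT; apply/hasPn => x; rewrite !mem_filter.
    move=> /andP[_ xt]; apply/negP => /andP[_ xs]; by apply: (reg x).
  move=> x; rewrite memsg mem_cat !mem_filter !inE /sg.
  case: (eqVneq x u) => [->|xu]; first by rewrite (negbTE v1) (negbTE u2) /=.
  case: (eqVneq x v) => [->|xv]; first by rewrite u1 v2 /=.
  by rewrite /= orbF.
- apply: (sort_geq _ d2).
    rewrite cat_uniq !filter_uniq //= andbT; apply/hasPn => x; rewrite !mem_filter.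
    move=> /andP[_ xt]; apply/negP => /andP[_ xs]; by apply: (reg x).
  move=> x; rewrite memsg mem_cat !mem_filter !inE /sg.
  case: (eqVneq x u) => [->|xu]; first by rewrite /= ?u1 ?v2 ?(negbTE v1) ?(negbTE u2) ?andbF ?orbF.
  case: (eqVneq x v) => [->|xv]; first by rewrite /= ?u1 ?v2 ?(negbTE v1) ?(negbTE u2) ?andbF ?orbF.
  by rewrite /= orbF.
Qed.

Lemma move_perm Y M1 M2 : M1 =i M2 -> move Y M1 = move Y M2.
Proof.
move=> E; rewrite /move.
have e1 : forall r : seq nat, [seq x <- r | x \notin M1] = [seq x <- r | x \notin M2].
  by move=> r; apply: eq_filter => x; rewrite E.
have e2 : forall r : seq nat, [seq x <- r | x \in M1] = [seq x <- r | x \in M2].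
  by move=> r; apply: eq_filter => x; rewrite E.
by rewrite !e1 !e2.
Qed.

Lemma ent_map f s i : ent (map f s) i = if ent s i is Fin x then Fin (f x) else ent s i.
Proof.
rewrite /ent size_map; case: ifP => // /andP[h1 h2].
by rewrite (nth_map 0) //; case: i h1 h2 => // i _ h2.
Qed.

Lemma zx_map f Y k : zx (map f Y.1, map f Y.2) k = if zx Y k is Fin x then Fin (f x) else zx Y k.
Proof. by rewrite /zx; case: (odd k); rewrite ent_map. Qed.

Lemma inj_chain (w : nat -> xnat) N : (forall k, k.+1 < N -> xlt (w k.+1) (w k)) ->
  forall a b, a < N -> b < N -> w a = w b -> a = b.
Proof.
move=> HD a b ha hb E; case: (ltngtP a b) => // h.
- by have := dec_chain HD h hb; rewrite E xlt_irr.
- by have := dec_chain HD h ha; rewrite E xlt_irr.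
Qed.

Lemma swap_sym Y p : is_symbol Y -> shape Y -> sp Y -> regular Y ->
  p.+1 < size Y.1 + size Y.2 ->
  (forall q, q.+2 < size Y.1 + size Y.2 -> xlt (sw (zx Y) p q.+2) (sw (zx Y) p q)) ->
  exists L, [/\ in_Sbar Y L, size L.1 = size Y.1, size L.2 = size Y.2,
     (forall q, zx L q = sw (zx Y) p q) & L <> Y].
Proof.
move=> isY shY spY reg hp HR.
have HD := zx_strict shY spY reg.
have [u [wu mu]] := zx_fin shY (ltnW hp).
have [v [wv mv]] := zx_fin shY hp.
have uv : u != v.
  by apply/eqP => E; have := HD p hp; rewrite wu wv E xlt_irr.
set L := (map (sg u v) Y.1, map (sg u v) Y.2).
have EL : forall q, zx L q = sw (zx Y) p q.
  move=> q; rewrite /L zx_map /sw; case: (eqVneq q p) => [->|qp].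
    by rewrite wu wv /sg eqxx.
  case: (eqVneq q p.+1) => [->|qp1].
    by rewrite wu wv /sg eq_sym (negbTE uv) eqxx.
  case: (ltnP q (size Y.1 + size Y.2)) => hq; last by rewrite zx_out.
  have [y [wy _]] := zx_fin shY hq; rewrite wy /sg.
  have yu : y != u.
    apply/eqP => E; have := inj_chain HD hq (ltnW hp); rewrite wy wu E => /(_ erefl) E'.
    by rewrite E' eqxx in qp.
  have yv : y != v.
    apply/eqP => E; have := inj_chain HD hq hp; rewrite wy wv E => /(_ erefl) E'.
    by rewrite E' eqxx in qp1.
  by rewrite (negbTE yu) (negbTE yv).
have shL : shape L by rewrite /shape /L /= !size_map.
have isL : is_symbol L.
  apply: zx_sym shL _ => q; rewrite /L /= !size_map !EL; exact: HR.
have s1 : forall x, x \in Y.1 -> x \in Y.2 -> False by move=> x a b; apply: (reg x).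
exists L; split.
- rewrite /in_Sbar; move: mu mv; rewrite /=; case: (odd p) => /= mu mv.
  + exists [:: v; u]; split.
      move=> x; rewrite !inE => /orP[/eqP->|/eqP->]; rewrite /inI.
        by rewrite mv; apply/negP => h; apply: (s1 v).
      by rewrite mu; case: (u \in Y.1) (s1 u) => // /(_ isT mu).
    have sgE : sg v u =1 sg u v by move=> x; apply: sgC; rewrite eq_sym.
    rewrite move_swap //; first by rewrite /L !(eq_map sgE).
    by rewrite !(eq_map sgE).
  + exists [:: u; v]; split.
      move=> x; rewrite !inE => /orP[/eqP->|/eqP->]; rewrite /inI.
        by rewrite mu; apply/negP => h; apply: (s1 u).
      by rewrite mv; case: (v \in Y.1) (s1 v) => // /(_ isT mv).
    by rewrite move_swap.
- by rewrite /L /= size_map.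
- by rewrite /L /= size_map.
- exact: EL.
- move=> E; have := EL p; rewrite E /sw eqxx => E'.
  by have := HD p hp; rewrite -E' xlt_irr.
Qed.

Lemma defect_sz (L : symbol) a b : size L.1 = a -> size L.2 = b -> defect L = (a%:Z - b%:Z)%R.
Proof. by rewrite /defect => -> ->. Qed.

Lemma part1 m Z Z' : special1 m Z -> special0 m.+1 Z' -> regular Z' ->
  (forall L', D_Z m m.+1 Z Z' L' <-> L' = Z') -> regular Z.
Proof.
move=> [isZ hZ1 hZ2 spZ] [isZ' hZ'1 hZ'2 [sp1 sp2]] reg H x [x1 x2].
have shZ : shape Z by rewrite /shape hZ1 hZ2 leqnSn leqnn.
have shZ' : shape Z' by rewrite /shape hZ'1 hZ'2 leqnSn leqnn.
have spZ0 : sp Z.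
  split => i; rewrite ?hZ1 ?hZ2 => hi; [exact: (spZ i hi).1 | exact: (spZ i hi).2].
have spZ'0 : sp Z' by split => i; rewrite ?hZ'1 ?hZ'2 => hi; [exact: sp1 | exact: sp2].
have [j [hj ej]] := nonreg_adj isZ shZ spZ0 x1 x2.
have [D1 D2 [_ Bp]] := (H Z').2 erefl.
rewrite (gtn_eqF (ltnSn m)) in Bp.
have [HL HU] := (transF Z hZ'1 hZ'2).1 Bp.
have HD := zx_strict shZ' spZ'0 reg; rewrite hZ'1 hZ'2 in HD.
have HN : zx Z (m.+1 + m.+1).-1 = NInf by rewrite zx_out // hZ1 hZ2; lia.
have [p [hp _ _ HL' HU']] := key (j := j) HL HU HD HN ltac:(rewrite hZ1 hZ2 in hj; lia) ej.
have HR := LowUp_row HL' HU'.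
have [L [SL sL1 sL2 EL LY]] := swap_sym isZ' shZ' spZ'0 reg
   ltac:(rewrite hZ'1 hZ'2; exact: hp) ltac:(rewrite hZ'1 hZ'2; exact: HR).
apply: LY; apply/(H L); split.
- split; last by rewrite (defect_sz hZ1 hZ2); lia.
  by exists [::]; split => //; rewrite move_nil.
- split => //; rewrite (defect_sz sL1 sL2) hZ'1 hZ'2; lia.
- split; first by rewrite (defect_sz sL1 sL2) (defect_sz hZ1 hZ2) hZ'1 hZ'2; lia.
  rewrite (gtn_eqF (ltnSn m)); apply/(transF Z (s := m.+1)); rewrite ?sL1 ?sL2 //.
  by split => k hk; rewrite EL; [apply: HL' | apply: HU'].
Qed.

Lemma part2 m Z Z' : special1 m Z -> special0 m Z' -> regular Z ->
  (forall L, D_Z' m m Z Z' L <-> L = Z) -> regular Z'.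
Proof.
move=> [isZ hZ1 hZ2 spZ] [isZ' hZ'1 hZ'2 [sp1 sp2]] reg H x [x1 x2].
have shZ : shape Z by rewrite /shape hZ1 hZ2 leqnSn leqnn.
have shZ' : shape Z' by rewrite /shape hZ'1 hZ'2 leqnSn leqnn.
have spZ0 : sp Z.
  split => i; rewrite ?hZ1 ?hZ2 => hi; [exact: (spZ i hi).1 | exact: (spZ i hi).2].
have spZ'0 : sp Z' by split => i; rewrite ?hZ'1 ?hZ'2 => hi; [exact: sp1 | exact: sp2].
have [j [hj ej]] := nonreg_adj isZ' shZ' spZ'0 x1 x2.
have [D1 D2 [_ Bp]] := (H Z).2 erefl.
rewrite eqxx in Bp.
have [HL HU] := (transT hZ1 hZ2 hZ'1 hZ'2).1 Bp.
have HD := zx_strict shZ spZ0 reg; rewrite hZ1 hZ2 in HD.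
have HN : zx Z' (m.+1 + m).-1 = NInf by rewrite zx_out // hZ'1 hZ'2; lia.
have [p [hp _ _ HL' HU']] := key (j := j) HL HU HD HN ltac:(rewrite hZ'1 hZ'2 in hj; lia) ej.
have HR := LowUp_row HL' HU'.
have [L [SL sL1 sL2 EL LY]] := swap_sym isZ shZ spZ0 reg
   ltac:(rewrite hZ1 hZ2; exact: hp) ltac:(rewrite hZ1 hZ2; exact: HR).
apply: LY; apply/(H L); split.
- split => //; rewrite (defect_sz sL1 sL2) hZ1 hZ2; lia.
- split; last by rewrite (defect_sz hZ'1 hZ'2); lia.
  by exists [::]; split => //; rewrite move_nil.
- split; first by rewrite (defect_sz sL1 sL2) (defect_sz hZ'1 hZ'2) hZ1 hZ2; lia.
  rewrite eqxx; apply/(transT (n := m)); rewrite ?sL1 ?sL2 //.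
  by split => k hk; rewrite EL; [apply: HL' | apply: HU'].
Qed.

Theorem lemma0804 (m m' : nat) (Z Z' : symbol) :
  special1 m Z -> special0 m' Z' -> (m' = m \/ m' = m.+1) ->
  (m' = m.+1 -> regular Z' ->
     (forall L' : symbol, D_Z m m' Z Z' L' <-> L' = Z') -> regular Z) /\
  (m' = m -> regular Z ->
     (forall L : symbol, D_Z' m m' Z Z' L <-> L = Z) -> regular Z').
Proof.
move=> h1 h2 _; split => E; subst m'.
- exact: part1.
- exact: part2.
Qed.
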